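(* Let $\Bbbk$ be an algebraically closed field of characteristic zero, $G$ a finite group, $\chi:G\to\Bbbk^\times$ a linear character, $g\in Z(G)$, $n\geq2$ the multiplicative order of $\chi(g)$, and $H$ the $\Bbbk$-algebra generated by $\Bbbk G$ and $z$ with relations $z^n=0$, $zs=\chi(s)sz$ ($s\in G$). Then for each $0\leq m\leq n-1$, the $2^p-1$ ideals $\big(z^m\sum_{i\in S}e_i\big)$, for $S$ ranging over the nonempty subsets of $\{0,1,\dots,p-1\}$, are pairwise distinct.
   Context: $\chi_0,\dots,\chi_{p-1}$ are the irreducible characters of $G$ and $e_i=\frac{\chi_i(1)}{|G|}\sum_{h\in G}\chi_i(h)h^{-1}$ (so $\sum_{i=0}^{p-1}e_i=1$). $(a)$ denotes the two-sided ideal of $H$ generated by $a$. *)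

(* Defs.v *)
From HB Require Import structures.
From mathcomp Require Import all_boot all_order all_algebra all_fingroup.
From mathcomp Require Import mxrepresentation center.
Set Implicit Arguments. Unset Strict Implicit. Unset Printing Implicit Defensive.
Import GRing.Theory.
Local Open Scope ring_scope.

(* The algebra H = <kG, z | z^n = 0, z s = chi(s) s z>, realised concretely on
   its standard basis { s z^j : s in G, 0 <= j < n }.  An element is the
   coefficient function (s, j) |-> coefficient of s z^j. *)
Definition Halg (F : fieldType) (gT : finGroupType) (n : nat) :=
  {ffun gT * 'I_n -> F}.

(* multiplication: (s z^i)(t z^j) = chi(t)^i (s t) z^(i+j), which is 0 when i+j >= n *)
Definition Hmul (F : fieldType) (gT : finGroupType) (n : nat) (chi : gT -> F)
  (a b : Halg F gT n) : Halg F gT n :=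
  [ffun p : gT * 'I_n =>
     \sum_(x : gT * 'I_n) \sum_(y : gT * 'I_n)
        if (x.1 * y.1 == p.1)%g && (x.2 + y.2 == p.2 :> nat)%N
        then a x * b y * chi y.1 ^+ x.2 else 0].

Definition Hbasis (F : fieldType) (gT : finGroupType) (n : nat)
  (s : gT) (j : 'I_n) : Halg F gT n :=
  [ffun p : gT * 'I_n => if p == (s, j) then 1 else 0].

Definition in_ideal (F : fieldType) (gT : finGroupType) (n : nat) (chi : gT -> F)
  (a v : Halg F gT n) : Prop :=
  exists s : seq (Halg F gT n * Halg F gT n),
    v = \sum_(p <- s) Hmul chi (Hmul chi p.1 a) p.2.

Definition is_irr_char (F : fieldType) (gT : finGroupType) (phi : {ffun gT -> F}) : Prop :=
  exists d (rG : mx_representation F [set: gT]%G d),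
    mx_irreducible rG /\ forall x : gT, phi x = \tr (rG x).

(* central idempotent e_phi = phi(1)/|G| sum_h phi(h) h^-1, as element of H *)
Definition cidem (F : fieldType) (gT : finGroupType) (n : nat) (phi : {ffun gT -> F})
  : Halg F gT n :=
  [ffun p : gT * 'I_n =>
     if (p.2 : nat) == 0%N
     then phi 1%g / (#|[set: gT]|%:R) * phi (p.1^-1)%g
     else 0].

(* Main.v *)
Require Import Defs.
From HB Require Import structures.
From mathcomp Require Import all_boot all_order all_algebra all_fingroup.
From mathcomp Require Import mxrepresentation center.
From mathcomp Require Import zify ring.
Set Implicit Arguments. Unset Strict Implicit. Unset Printing Implicit Defensive.
Import GRing.Theory.
Local Open Scope ring_scope.

Definition Lin (F : fieldType) (gT : finGroupType) n d
  (rho : mx_representation F [set: gT]%G d) (k : 'I_n) (f : gT -> F)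
  (a : Halg F gT n) : 'M[F]_d :=
  \sum_(q : gT * 'I_n | q.2 == k) (a q * f q.1) *: rho q.1.

Lemma Lin_sum (F : fieldType) (gT : finGroupType) n d
  (rho : mx_representation F [set: gT]%G d) (k : 'I_n) (f : gT -> F)
  (I : Type) (r : seq I) (g : I -> Halg F gT n) :
  Lin rho k f (\sum_(i <- r) g i) = \sum_(i <- r) Lin rho k f (g i).
Proof.
rewrite /Lin; under eq_bigr => q _ do rewrite sum_ffunE mulr_suml scaler_suml.
by rewrite exchange_big.
Qed.

Lemma Lin_mul (F : fieldType) (gT : finGroupType) n d
  (rho : mx_representation F [set: gT]%G d) (k : 'I_n) (f : gT -> F)
  (chi : gT -> F) (a b : Halg F gT n) :
  Lin rho k f (Hmul chi a b) =
  \sum_(x : gT * 'I_n) \sum_(y : gT * 'I_n)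
    (if (x.2 + y.2 == k)%N
     then (a x * b y * chi y.1 ^+ x.2 * f (x.1 * y.1)%g) *: rho (x.1 * y.1)%g
     else 0).
Proof.
rewrite /Lin.
transitivity (\sum_(p : gT * 'I_n | p.2 == k) \sum_(x : gT * 'I_n) \sum_(y : gT * 'I_n)
   ((if (x.1 * y.1 == p.1)%g && (x.2 + y.2 == p.2 :> nat)%N
     then a x * b y * chi y.1 ^+ x.2 else 0) * f p.1) *: rho p.1).
  apply: eq_bigr => p _; rewrite ffunE mulr_suml scaler_suml.
  by apply: eq_bigr => x _; rewrite mulr_suml scaler_suml.
rewrite exchange_big; apply: eq_bigr => x _; rewrite exchange_big.
apply: eq_bigr => y _.
case: eqP => hm.
  rewrite (bigD1 (x.1 * y.1, k)%g) //= eqxx hm eqxx /= big1 ?addr0 // => p /andP [pk np].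
  case: ifP => [/andP [/eqP e1 /eqP e2] | _]; last by rewrite mul0r scale0r.
  exfalso; move/eqP: np; apply; move: e1 pk {e2}; case: p => p1 p2 /= -> /eqP -> //.
apply: big1 => p /eqP pk; rewrite -pk in hm.
by move/eqP/negbTE: hm => ->; rewrite andbF mul0r scale0r.
Qed.

Definition supp_ge (F : fieldType) (gT : finGroupType) n (a : Halg F gT n) (m : nat) :=
  forall q : gT * 'I_n, (q.2 < m)%N -> a q = 0.

Lemma supp_left (F : fieldType) (gT : finGroupType) n (chi : gT -> F) (x w : Halg F gT n) m :
  supp_ge w m -> supp_ge (Hmul chi x w) m.
Proof.
move=> hw q hq; rewrite ffunE big1 // => a _; rewrite big1 // => b _.
case: ifP => // /andP [_ /eqP e]; rewrite hw ?mulr0 ?mul0r //; lia.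
Qed.

Lemma supp_right (F : fieldType) (gT : finGroupType) n (chi : gT -> F) (v y : Halg F gT n) m :
  supp_ge v m -> supp_ge (Hmul chi v y) m.
Proof.
move=> hw q hq; rewrite ffunE big1 // => a _; rewrite big1 // => b _.
case: ifP => // /andP [_ /eqP e]; rewrite hw ?mulr0 ?mul0r //; lia.
Qed.

Lemma Q_left (F : fieldType) (gT : finGroupType) n d
  (rho : mx_representation F [set: gT]%G d) (chi : gT -> F) (m o0 : 'I_n) (x w : Halg F gT n) :
  (forall s t : gT, chi (s * t)%g = chi s * chi t) -> (o0 : nat) = 0%N ->
  supp_ge w m ->
  Lin rho m (fun s => (chi s ^+ m)^-1) (Hmul chi x w) =
  Lin rho o0 (fun s => (chi s ^+ m)^-1) x *m Lin rho m (fun s => (chi s ^+ m)^-1) w.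
Proof.
move=> chiM ho0 hw; rewrite Lin_mul /Lin mulmx_suml [RHS]big_mkcond.
apply: eq_bigr => a _; case: ifP => ha.
  rewrite mulmx_sumr [RHS]big_mkcond; apply: eq_bigr => b _.
  rewrite (eqP ha) ho0 add0n val_eqE; case: ifP => // _.
  rewrite -scalemxAl -scalemxAr scalerA -repr_mxM ?in_setT //; congr (_ *: _).
  by rewrite expr0 mulr1 chiM exprMn invfM mulrACA.
apply: big1 => b _; case: ifP => // /eqP e.
rewrite hw ?mulr0 ?mul0r ?scale0r //.
have : a.2 != o0 by rewrite ha.
rewrite -val_eqE /= ho0; lia.
Qed.

Lemma Q_right (F : fieldType) (gT : finGroupType) n d
  (rho : mx_representation F [set: gT]%G d) (chi : gT -> F) (m o0 : 'I_n) (v y : Halg F gT n) :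
  (forall s t : gT, chi (s * t)%g = chi s * chi t) -> (forall s, chi s != 0) ->
  (o0 : nat) = 0%N ->
  supp_ge v m ->
  Lin rho m (fun s => (chi s ^+ m)^-1) (Hmul chi v y) =
  Lin rho m (fun s => (chi s ^+ m)^-1) v *m Lin rho o0 (fun _ => 1) y.
Proof.
move=> chiM chi0 ho0 hv; rewrite Lin_mul /Lin mulmx_suml [RHS]big_mkcond.
apply: eq_bigr => a _; case: ifP => ha.
  rewrite mulmx_sumr [RHS]big_mkcond; apply: eq_bigr => b _.
  rewrite (eqP ha).
  have -> : (m + b.2 == m)%N = (b.2 == o0) by rewrite -val_eqE /= ho0; lia.
  case: ifP => // _.
  rewrite -scalemxAl -scalemxAr scalerA -repr_mxM ?in_setT //; congr (_ *: _).
  rewrite chiM exprMn invfM.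
  have hb : chi b.1 ^+ m != 0 by rewrite expf_neq0.
  have ha' : chi a.1 ^+ m != 0 by rewrite expf_neq0.
  by rewrite mulr1 [_^-1 / _]mulrC mulrA (mulfK hb) mulrAC.
apply: big1 => b _; case: ifP => // /eqP e.
rewrite hv ?mulr0 ?mul0r ?scale0r //.
have : a.2 != m by rewrite ha.
rewrite -val_eqE /=; lia.
Qed.
Lemma cross_schur (F : fieldType) (gT : finGroupType) d1 d2
  (r1 : mx_representation F [set: gT]%G d1) (r2 : mx_representation F [set: gT]%G d2)
  (B : 'M_(d2, d1)) :
  mx_irreducible r1 -> mx_irreducible r2 ->
  (forall x, r2 x *m B = B *m r1 x) -> B != 0 -> mx_rsim r2 r1.
Proof.
move=> irr1 irr2 hB nzB.
have modB: mxmodule r1 B by apply/mxmoduleP => x _; rewrite -hB submxMl.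
have fullB: row_full B.
  have modG: mxmodule r1 <<B>>%MS by rewrite (eqmx_module _ (genmxE B)).
  have nzG: <<B>>%MS != 0 by rewrite (eqmx_eq0 (genmxE B)).
  case/mx_irrP: irr1 => _ /(_ _ modG nzG).
  by rewrite /row_full (genmxE B).
have modK: mxmodule r2 (kermx B).
  by apply/mxmoduleP => x _; apply/sub_kermxP; rewrite -mulmxA hB mulmxA mulmx_ker mul0mx.
have freeB: row_free B.
  rewrite -kermx_eq0; apply/negPn/negP => nzK.
  case/mx_irrP: irr2 => _ /(_ _ modK nzK) fullK.
  move/negP: nzB; apply; apply/eqP.
  by rewrite -[B]mul1mx; apply/sub_kermxP; rewrite sub1mx.
have ed: d2 = d1 by rewrite -(eqP freeB) (eqP fullB).
by exists B.
Qed.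

Definition avg (F : fieldType) (gT : finGroupType) d1 d2
  (r1 : mx_representation F [set: gT]%G d1) (r2 : mx_representation F [set: gT]%G d2)
  (A : 'M_(d2, d1)) : 'M_(d2, d1) :=
  \sum_(s : gT) r2 (s^-1)%g *m A *m r1 s.

Lemma avg_inter (F : fieldType) (gT : finGroupType) d1 d2
  (r1 : mx_representation F [set: gT]%G d1) (r2 : mx_representation F [set: gT]%G d2)
  (A : 'M_(d2, d1)) x : r2 x *m avg r1 r2 A = avg r1 r2 A *m r1 x.
Proof.
rewrite /avg mulmx_sumr mulmx_suml (reindex_inj (mulIg x)) /=.
apply: eq_bigr => t _.
rewrite !mulmxA -(repr_mxM r2) ?in_setT // invMg mulgA mulgV mul1g.
by rewrite -(mulmxA _ (r1 t)) -(repr_mxM r1) ?in_setT.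
Qed.

Lemma entry_formula (F : fieldType) (gT : finGroupType) d1 d2
  (r1 : mx_representation F [set: gT]%G d1) (r2 : mx_representation F [set: gT]%G d2) i j :
  (\sum_(s : gT) \tr (r2 (s^-1)%g) *: r1 s) i j
  = \sum_(k < d2) avg r1 r2 (delta_mx k i) k j.
Proof.
rewrite summxE.
under eq_bigr => s _ do rewrite mxE /mxtrace mulr_suml.
rewrite exchange_big /=; apply: eq_bigr => k _.
rewrite /avg summxE; apply: eq_bigr => s _.
rewrite -[delta_mx k i](@mul_delta_mx _ d2 1 d1 0 k i) !mulmxA -colE -mulmxA -rowE.
by rewrite mxE big_ord1 !mxE.
Qed.

Lemma orth0 (F : fieldType) (gT : finGroupType) d1 d2
  (r1 : mx_representation F [set: gT]%G d1) (r2 : mx_representation F [set: gT]%G d2) :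
  mx_irreducible r1 -> mx_irreducible r2 -> ~ mx_rsim r2 r1 ->
  \sum_(s : gT) \tr (r2 (s^-1)%g) *: r1 s = 0.
Proof.
move=> irr1 irr2 nsim; apply/matrixP => i j; rewrite entry_formula mxE big1 // => k _.
have ->: avg r1 r2 (delta_mx k i) = 0; last by rewrite mxE.
apply/eqP; apply/negP => nz; apply: nsim.
exact: (cross_schur irr1 irr2 (avg_inter r1 r2 _) (introN idP nz)).
Qed.

Lemma tr_delta (F : fieldType) d (k i : 'I_d) : \tr (delta_mx k i : 'M[F]_d) = (k == i)%:R.
Proof.
rewrite /mxtrace (bigD1 k) //= big1 => [|l nlk]; rewrite mxE ?(negbTE nlk) //.
by rewrite eqxx addr0.
Qed.

Lemma natf_neq0_0 (F : fieldType) k : [pchar F] =i pred0 -> (0 < k)%N -> (k%:R : F) != 0.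
Proof. by move/pcharf0P => h; rewrite h -lt0n. Qed.

Lemma orth1 (F : closedFieldType) (gT : finGroupType) d
  (r : mx_representation F [set: gT]%G d) :
  [pchar F] =i pred0 -> mx_irreducible r ->
  \sum_(s : gT) \tr (r (s^-1)%g) *: r s = (#|[set: gT]|%:R / d%:R) *: 1%:M.
Proof.
move=> ch irr.
have d_gt0 : (0 < d)%N by case/mx_irrP: irr.
have dnz := natf_neq0_0 ch d_gt0.
have abs := group_closure_closed_field irr.
have sc A : avg r r A = (#|[set: gT]|%:R * \tr A / d%:R)%:M.
  have /is_scalar_mxP [c hc] : is_scalar_mx (avg r r A).
    by apply: (mx_abs_irr_cent_scalar abs); apply/centgmxP => x _; rewrite avg_inter.
  have htr: \tr (avg r r A) = #|[set: gT]|%:R * \tr A.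
    rewrite /avg (big_morph _ (@mxtraceD _ _) (mxtrace0 _ _)).
    under eq_bigr do rewrite mxtrace_mulC mulmxA -repr_mxM ?in_setT // mulgV repr_mx1 mul1mx.
    by rewrite sumr_const cardsT mulr_natl.
  rewrite hc in htr *; rewrite mxtrace_scalar in htr.
  by rewrite -htr -[c *+ d]mulr_natr (mulfK dnz).
apply/matrixP => i j; rewrite entry_formula.
under eq_bigr do rewrite sc tr_delta mxE.
rewrite (bigD1 j) //= big1 => [|k nkj]; last by rewrite (negbTE nkj).
rewrite addr0 eqxx mulr1n !mxE eq_sym; case: (i == j); rewrite ?mulr1 ?mulr0 //.
by rewrite mul0r.
Qed.

Lemma Lin_basis (F : fieldType) (gT : finGroupType) n d
  (rho : mx_representation F [set: gT]%G d) (k : 'I_n) (f : gT -> F) :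
  Lin rho k f (Hbasis F (1%g : gT) k) = f 1%g *: 1%:M.
Proof.
rewrite /Lin (bigD1 (1%g, k)) //= big1 => [|q /andP [_ nq]].
  by rewrite ffunE eqxx mul1r repr_mx1 addr0.
by rewrite ffunE (negbTE nq) mul0r scale0r.
Qed.

Lemma supp_basis (F : fieldType) (gT : finGroupType) n (k : 'I_n) :
  supp_ge (Hbasis F (1%g : gT) k) k.
Proof.
move=> q hq; rewrite ffunE; case: eqP => // e; rewrite e /= in hq.
by rewrite ltnn in hq.
Qed.

Lemma pair_sum_snd (M : nmodType) (T : finType) n (k : 'I_n) (G : T * 'I_n -> M) :
  \sum_(q : T * 'I_n | q.2 == k) G q = \sum_(s : T) G (s, k).
Proof.
transitivity (\sum_(s : T) \sum_(j : 'I_n | j == k) G (s, j)); last first.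
  by apply: eq_bigr => s _; rewrite big_pred1_eq.
rewrite (pair_big_dep xpredT (fun _ j => j == k) (fun i j => G (i, j))) /=.
by apply: eq_big => [[s j]|[s j] _].
Qed.

Lemma P_cidem (F : closedFieldType) (gT : finGroupType) n d
  (rho : mx_representation F [set: gT]%G d) (phi0 psi : {ffun gT -> F}) (o0 : 'I_n) :
  [pchar F] =i pred0 -> mx_irreducible rho -> (forall x, phi0 x = \tr (rho x)) ->
  is_irr_char psi -> (o0 : nat) = 0%N ->
  Lin rho o0 (fun _ => 1) (cidem n psi) = (psi == phi0)%:R *: 1%:M.
Proof.
move=> ch irr hphi [d2 [r2 [irr2 hpsi]]] ho0.
rewrite /Lin pair_sum_snd.
under eq_bigr do rewrite ffunE /= ho0 eqxx mulr1 -scalerA.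
rewrite -scaler_sumr.
case: eqP => [-> | ne].
  under eq_bigr do rewrite hphi.
  rewrite orth1 // scalerA hphi repr_mx1 mxtrace1 scale1r.
  have d_gt0 : (0 < d)%N by case/mx_irrP: irr.
  have dnz := natf_neq0_0 ch d_gt0.
  have gnz : (#|[set: gT]|%:R : F) != 0.
    by apply: natf_neq0_0 => //; rewrite cardsT; apply/card_gt0P; exists 1%g.
  by rewrite mulrA (mulfVK gnz) (mulfV dnz) scale1r.
under eq_bigr do rewrite hpsi.
rewrite orth0 ?scaler0 ?scale0r // => sim; apply: ne; apply/ffunP => x.
by rewrite hpsi hphi (mxtrace_rsim sim) ?in_setT.
Qed.

Lemma P_sum (F : closedFieldType) (gT : finGroupType) n d
  (rho : mx_representation F [set: gT]%G d) (phi0 : {ffun gT -> F}) (o0 : 'I_n)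
  (S : seq {ffun gT -> F}) :
  [pchar F] =i pred0 -> mx_irreducible rho -> (forall x, phi0 x = \tr (rho x)) ->
  (forall phi, phi \in S -> is_irr_char phi) -> (o0 : nat) = 0%N -> uniq S ->
  Lin rho o0 (fun _ => 1) (\sum_(phi <- S) cidem n phi) = (phi0 \in S)%:R *: 1%:M.
Proof.
move=> ch irr hphi hS ho0 uS; rewrite Lin_sum.
rewrite big_seq_cond (eq_bigr (fun phi => (phi == phi0)%:R *: 1%:M)); last first.
  by move=> phi /andP [phiS _]; rewrite (P_cidem ch irr hphi (hS _ phiS) ho0).
rewrite -big_seq_cond.
case: (boolP (phi0 \in S)) => h0.
  rewrite (bigD1_seq phi0) //= eqxx big1 ?addr0 // => phi nphi.
  by rewrite (negbTE nphi) scale0r.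
rewrite big_seq big1 ?scale0r // => phi phiS.
have -> : (phi == phi0) = false by apply/negbTE; apply: contraNneq h0 => <-.
by rewrite scale0r.
Qed.

Lemma key (F : closedFieldType) (gT : finGroupType) (chi : gT -> F) (n : nat) (m : 'I_n)
  (S1 S2 : seq {ffun gT -> F}) (phi0 : {ffun gT -> F}) :
  [pchar F] =i pred0 ->
  (forall s t : gT, chi (s * t)%g = chi s * chi t) ->
  (forall s : gT, chi s != 0) -> (1 < n)%N ->
  uniq S1 -> uniq S2 ->
  (forall phi, phi \in S1 -> is_irr_char phi) ->
  (forall phi, phi \in S2 -> is_irr_char phi) ->
  phi0 \in S1 -> phi0 \notin S2 ->
  ~ (forall v : Halg F gT n,
       in_ideal chi (Hmul chi (Hbasis F 1%g m) (\sum_(phi <- S1) cidem n phi)) v ->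
       in_ideal chi (Hmul chi (Hbasis F 1%g m) (\sum_(phi <- S2) cidem n phi)) v).
Proof.
move=> ch chiM chi0 n_gt1 u1 u2 hS1 hS2 h1 h2 himp.
have [d [rho [irr hphi]]] := hS1 _ h1.
have n_gt0 : (0 < n)%N := ltnW n_gt1.
pose o0 : 'I_n := Ordinal n_gt0.
have ho0 : (o0 : nat) = 0%N by [].
have chi1 : chi 1%g = 1.
  by apply: (mulfI (chi0 1%g)); rewrite mulr1 -chiM mulg1.
pose cinv := fun s => (chi s ^+ m)^-1.
have hQg E : Lin rho m cinv (Hmul chi (Hbasis F (1%g : gT) m) E) = Lin rho o0 (fun _ => 1) E.
  rewrite (Q_right rho _ chiM chi0 ho0) ?Lin_basis /cinv ?chi1 ?expr1n ?invr1 ?scale1r ?mul1mx //.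
  exact: supp_basis.
have sg E : supp_ge (Hmul chi (Hbasis F (1%g : gT) m) E) m.
  by apply: supp_right; apply: supp_basis.
have hterm x y E : Lin rho m cinv (Hmul chi (Hmul chi x (Hmul chi (Hbasis F (1%g : gT) m) E)) y)
   = Lin rho o0 cinv x *m Lin rho o0 (fun _ => 1) E *m Lin rho o0 (fun _ => 1) y.
  rewrite (Q_right rho _ chiM chi0 ho0); last by apply: supp_left; apply: sg.
  by rewrite (Q_left rho _ chiM ho0 (sg E)) hQg.
pose one := Hbasis F (1%g : gT) o0.
have : in_ideal chi (Hmul chi (Hbasis F 1%g m) (\sum_(phi <- S1) cidem n phi))
         (Hmul chi (Hmul chi one (Hmul chi (Hbasis F 1%g m) (\sum_(phi <- S1) cidem n phi))) one).
  by exists [:: (one, one)]; rewrite big_cons big_nil addr0.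
move/himp => [s hs].
have hR : Lin rho m cinv (\sum_(p <- s) Hmul chi (Hmul chi p.1
     (Hmul chi (Hbasis F (1%g : gT) m) (\sum_(phi <- S2) cidem n phi))) p.2) = 0.
  rewrite Lin_sum big1 // => p _.
  by rewrite hterm (P_sum ch irr hphi hS2 ho0 u2) (negbTE h2) scale0r mulmx0 mul0mx.
have := congr1 (Lin rho m cinv) hs; rewrite hR hterm.
rewrite !Lin_basis /cinv chi1 expr1n invr1 scale1r mul1mx mulmx1.
rewrite (P_sum ch irr hphi hS1 ho0 u1) h1 scale1r.
have d_gt0 : (0 < d)%N by case/mx_irrP: irr.
move/matrixP => /(_ (Ordinal d_gt0) (Ordinal d_gt0)); rewrite !mxE eqxx /=.
by move/eqP; rewrite oner_eq0.
Qed.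

Unset Implicit Arguments.
Set Strict Implicit.

Theorem corollary3p7 (F : closedFieldType) (gT : finGroupType)
  (chi : gT -> F) (g : gT) (n : nat) :
  [pchar F] =i pred0 ->
  (forall s t : gT, chi (s * t)%g = chi s * chi t) ->
  (forall s : gT, chi s != 0) ->
  (g \in 'Z([set: gT]))%g ->
  (1 < n)%N ->
  n.-primitive_root (chi g) ->
  forall m : 'I_n,
  forall S1 S2 : seq {ffun gT -> F},
    uniq S1 -> uniq S2 -> S1 != [::] -> S2 != [::] ->
    (forall phi, phi \in S1 -> is_irr_char phi) ->
    (forall phi, phi \in S2 -> is_irr_char phi) ->
    (forall v : Halg F gT n,
       in_ideal chi (Hmul chi (Hbasis F 1%g m) (\sum_(phi <- S1) cidem n phi)) v <->
       in_ideal chi (Hmul chi (Hbasis F 1%g m) (\sum_(phi <- S2) cidem n phi)) v) ->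
    S1 =i S2.
Proof.
move=> ch chiM chi0 _ n_gt1 _ m S1 S2 u1 u2 _ _ h1 h2 heq x.
apply/idP/idP => hx; apply/negPn/negP => hn.
  by apply: (key ch chiM chi0 n_gt1 u1 u2 h1 h2 hx hn) => v /heq.
by apply: (key ch chiM chi0 n_gt1 u2 u1 h2 h1 hx hn) => v /heq.
Qed.
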